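(* Let $X=(X,a)$ be a $\mathsf V$-category and $\Delta\subseteq X\times X$ the diagonal, where $X\times X$ is the product $\mathsf V$-category. Then the L-closure of $\Delta$ in $X\times X$ is $\overline\Delta=\{(x,y)\in X\times X\mid x\cong y\}$.
   Context: Let $\mathsf V=(\mathsf V,\otimes,k)$ be a commutative unital quantale (complete lattice with commutative associative $\otimes$, neutral element $k$, $u\otimes(-)$ preserving suprema). A $\mathsf V$-category $(X,a)$ is a set with $a:X\times X\to\mathsf V$, $k\le a(x,x)$, $a(x,y)\otimes a(y,z)\le a(x,z)$; a $\mathsf V$-functor $f:(X,a)\to(Y,b)$ satisfies $a(x,y)\le b(f(x),f(y))$. The product $X\times X$ in the category of $\mathsf V$-categories has structure $((x,y),(x',y'))\mapsto a(x,x')\wedge a(y,y')$. For points, $u\cong v$ in $(Z,c)$ means $k\le c(u,v)$ and $k\le c(v,u)$. The L-closure of a subset $M$ of a $\mathsf V$-category $W$ is $\overline M=\{w\in W\mid$ for all $\mathsf V$-functors $g,h:W\to Z$ with $g|_M=h|_M$ one has $g(w)\cong h(w)\}$. *)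

(* Defs.v *)
Record quantale := Quantale {
  qcar :> Type;
  qle : qcar -> qcar -> Prop;
  qsup : (qcar -> Prop) -> qcar;
  qtens : qcar -> qcar -> qcar;
  qk : qcar;
  qle_refl : forall u, qle u u;
  qle_trans : forall u v w, qle u v -> qle v w -> qle u w;
  qle_antisym : forall u v, qle u v -> qle v u -> u = v;
  qsup_ub : forall (P : qcar -> Prop) u, P u -> qle u (qsup P);
  qsup_least : forall (P : qcar -> Prop) v,
      (forall u, P u -> qle u v) -> qle (qsup P) v;
  qtens_assoc : forall u v w, qtens u (qtens v w) = qtens (qtens u v) w;
  qtens_comm : forall u v, qtens u v = qtens v u;
  qtens_k : forall u, qtens qk u = u;
  qtens_sup : forall u (P : qcar -> Prop),
      qtens u (qsup P) = qsup (fun w => exists v, P v /\ w = qtens u v)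
}.

Definition qmeet (V : quantale) (u v : V) : V :=
  qsup V (fun w => qle V w u /\ qle V w v).

Definition is_vcat (V : quantale) (X : Type) (a : X -> X -> V) : Prop :=
  (forall x, qle V (qk V) (a x x)) /\
  (forall x y z, qle V (qtens V (a x y) (a y z)) (a x z)).

Definition is_vfunctor (V : quantale) (X Y : Type) (a : X -> X -> V)
  (b : Y -> Y -> V) (f : X -> Y) : Prop :=
  forall x y, qle V (a x y) (b (f x) (f y)).

Definition prod_struct (V : quantale) (X : Type) (a : X -> X -> V)
  : (X * X) -> (X * X) -> V :=
  fun p q => qmeet V (a (fst p) (fst q)) (a (snd p) (snd q)).

Definition viso (V : quantale) (Z : Type) (c : Z -> Z -> V) (u v : Z) : Prop :=
  qle V (qk V) (c u v) /\ qle V (qk V) (c v u).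

Definition Lclosure (V : quantale) (W : Type) (d : W -> W -> V)
  (M : W -> Prop) : W -> Prop :=
  fun w => forall (Z : Type) (c : Z -> Z -> V) (g h : W -> Z),
    is_vcat V Z c -> is_vfunctor V W Z d c g -> is_vfunctor V W Z d c h ->
    (forall m, M m -> g m = h m) -> viso V Z c (g w) (h w).

(* Main.v *)
Require Import Defs.

Lemma tens_monr (V : quantale) (w u v : V) :
  qle V u v -> qle V (qtens V w u) (qtens V w v).
Proof.
  intros H.
  assert (E : v = qsup V (fun z => z = u \/ z = v)).
  { apply qle_antisym. apply qsup_ub; auto.
    apply qsup_least. intros z [->| ->]; auto using qle_refl. }
  rewrite E, qtens_sup. apply qsup_ub. exists u; auto.
Qed.

Lemma tens_mon (V : quantale) (u u' v v' : V) :
  qle V u u' -> qle V v v' -> qle V (qtens V u v) (qtens V u' v').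
Proof.
  intros H1 H2. apply qle_trans with (qtens V u v').
  apply tens_monr; auto.
  rewrite (qtens_comm V u), (qtens_comm V u'). apply tens_monr; auto.
Qed.

Lemma meet_glb (V : quantale) (w u v : V) :
  qle V w u -> qle V w v -> qle V w (qmeet V u v).
Proof. intros; unfold qmeet; apply qsup_ub; auto. Qed.

Lemma meet_l (V : quantale) (u v : V) : qle V (qmeet V u v) u.
Proof. unfold qmeet; apply qsup_least; intros z [? ?]; auto. Qed.
Lemma meet_r (V : quantale) (u v : V) : qle V (qmeet V u v) v.
Proof. unfold qmeet; apply qsup_least; intros z [? ?]; auto. Qed.

Lemma half (V : quantale) (Z : Type) (c : Z -> Z -> V) (A B C : Z) :
  is_vcat V Z c -> qle V (qk V) (c A B) -> qle V (qk V) (c B C) ->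
  qle V (qk V) (c A C).
Proof.
  intros [_ Ht] H1 H2.
  apply qle_trans with (qtens V (c A B) (c B C)); auto.
  pose proof (tens_mon V _ _ _ _ H1 H2) as Hm. rewrite qtens_k in Hm. exact Hm.
Qed.

Theorem mainTheorem9 (V : quantale) (X : Type) (a : X -> X -> V) :
  is_vcat V X a ->
  forall p : X * X,
    Lclosure V (X * X) (prod_struct V X a) (fun q => fst q = snd q) p <->
    viso V X a (fst p) (snd p).
Proof.
  intros HX [x y]; simpl; split.
  - intros HL. apply (HL X a fst snd HX).
    + intros p q; apply meet_l.
    + intros p q; apply meet_r.
    + auto.
  - intros [Hxy Hyx] Z c g h HZ Hg Hh Hd.
    pose proof (proj1 HX) as Hr.
    assert (gyy : g (y,y) = h (y,y)) by (apply Hd; reflexivity).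
    assert (P1 : qle V (qk V) (prod_struct V X a (x,y) (y,y)))
      by (apply meet_glb; simpl; auto).
    assert (P2 : qle V (qk V) (prod_struct V X a (y,y) (x,y)))
      by (apply meet_glb; simpl; auto).
    split.
    + apply half with (g (y,y)); auto.
      * eapply qle_trans; [exact P1| apply Hg].
      * rewrite gyy. eapply qle_trans; [exact P2| apply Hh].
    + apply half with (g (y,y)); auto.
      * rewrite gyy. eapply qle_trans; [exact P1| apply Hh].
      * eapply qle_trans; [exact P2| apply Hg].
Qed.
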